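(* Let $d\ge 1$ and let $f(t)=1+\sum_{i=1}^{d}\binom{x_i}{i}t^{i}$ be a polynomial of degree $d$ with positive real coefficients, where $x_1,\dots,x_d$ are real numbers with $x_i\ge i-1$. Suppose $f(t)$ is ultra log-concave and $x_d\ge d$. Then $x_1\ge x_2\ge\cdots\ge x_d$.
   Context: For a real number $x$ and an integer $k\ge 0$, $\binom{x}{k}=\frac{x(x-1)\cdots(x-k+1)}{k!}$. For every integer $k\ge1$ and real $y>0$ there is a unique real $x\ge k-1$ with $y=\binom{x}{k}$, so the $x_i$ are uniquely determined by the coefficients. A polynomial $a_0+a_1t+\cdots+a_dt^d$ of degree $d$ is called ultra log-concave if $\big(a_i/\binom{d}{i}\big)^2\ge \frac{a_{i-1}}{\binom{d}{i-1}}\cdot\frac{a_{i+1}}{\binom{d}{i+1}}$ for all $1\le i\le d-1$. *)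

(* Defs.v *)
From mathcomp Require Import all_boot all_order all_algebra.
From mathcomp Require Import reals.
Set Implicit Arguments. Unset Strict Implicit. Unset Printing Implicit Defensive.
Import Order.TTheory GRing.Theory Num.Theory.
Local Open Scope ring_scope.

Definition rbinom (R : realType) (x : R) (k : nat) : R :=
  (\prod_(j < k) (x - j%:R)) / (k`!)%:R.

Definition ultra_log_concave (R : realType) (p : {poly R}) : Prop :=
  let d := (size p).-1 in
  forall i : nat, (1 <= i)%N -> (i <= d - 1)%N ->
    (p`_i / ('C(d, i))%:R) ^+ 2 >=
      (p`_i.-1 / ('C(d, i.-1))%:R) * (p`_i.+1 / ('C(d, i.+1))%:R).

Definition fpoly (R : realType) (d : nat) (x : nat -> R) : {poly R} :=
  1 + \sum_(1 <= i < d.+1) (rbinom (x i) i) *: 'X^i.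

(* Main.v *)
Require Import Defs.
From mathcomp Require Import all_boot all_order all_algebra.
From mathcomp Require Import reals lra.
Import Order.TTheory GRing.Theory Num.Theory.
Local Open Scope ring_scope.

Lemma coef_fpoly (R : realType) (d : nat) (x : nat -> R) i :
  (fpoly d x)`_i = if i == 0%N then 1 else if (i <= d)%N then rbinom (x i) i else 0.
Proof.
rewrite /fpoly coefD coef1 coef_sum.
under eq_bigr => k _ do rewrite coefZ coefXn.
case: i => [|i] /=.
  rewrite big1_seq ?addr0 // => k /andP[_]; rewrite mem_index_iota.
  by case: k => [//|k] _; rewrite mulr0.
rewrite add0r; case: ifP => Hi.
  rewrite (bigD1_seq i.+1) ?mem_index_iota ?iota_uniq //= eqxx mulr1.
  rewrite big1 ?addr0 // => k /negPf; by rewrite eq_sym => ->; rewrite mulr0.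
rewrite big1_seq // => k /andP[_]; rewrite mem_index_iota => /andP[_ Hk].
case: eqP => [E|]; last by rewrite mulr0.
by move: Hk; rewrite -E ltnS Hi.
Qed.

Definition Q {R : realType} (d : nat) (y : R) (n : nat) : R :=
  \prod_(0 <= j < n) ((y - j%:R) / (d%:R - j%:R)).

Lemma rbinom_Q (R : realType) (d : nat) (y : R) i : (i <= d)%N ->
  rbinom y i / ('C(d, i))%:R = Q d y i.
Proof.
move=> Hid; rewrite /Q big_mkord /rbinom prodf_div -mulrA -invfM -natrM mulnC bin_ffact.
rewrite ffact_prod natr_prod; congr (_ / _); apply: eq_bigr => j _.
by rewrite natrB // ltnW // (leq_trans (ltn_ord j)).
Qed.

Lemma Q_ge1 (R : realType) (d n : nat) (y : R) : d%:R <= y -> (n <= d)%N -> 1 <= Q d y n.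
Proof.
move=> Hy Hn; have E : \prod_(0 <= j < n) (1:R) = 1 by rewrite big1.
rewrite -E /Q !big_seq; apply: ler_prod => j; rewrite mem_index_iota => /andP[_ Hjn].
rewrite ler01 /=.
have Hj : (j < d)%N by apply: leq_trans Hn.
have Hd : 0 < d%:R - j%:R :> R by rewrite subr_gt0 ltr_nat.
by rewrite ler_pdivlMr // mul1r lerB.
Qed.

Lemma Q_lt1 (R : realType) (d n : nat) (y : R) : (0 < n)%N -> (n <= d)%N ->
  (n.-1)%:R <= y -> y < d%:R -> Q d y n < 1.
Proof.
move=> Hn0 Hn Hy1 Hy; have E : \prod_(0 <= j < n) (1:R) = 1 by rewrite big1.
rewrite -E /Q; apply: ltr_prod_nat => // j /andP[_ Hjn].
have Hj : (j < d)%N by apply: leq_trans Hn.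
have Hd : 0 < d%:R - j%:R :> R by rewrite subr_gt0 ltr_nat.
have Hjy : j%:R <= y.
  apply: le_trans Hy1; rewrite ler_nat; by case: n Hjn {Hn0 Hn E}.
rewrite divr_ge0 ?subr_ge0 ?ler_nat ?(ltnW Hj) //=.
by rewrite ltr_pdivrMr // mul1r ltrD2r.
Qed.

Lemma Q_ge0 (R : realType) (d n : nat) (y : R) : (n <= d)%N ->
  (n.-1)%:R <= y -> 0 <= Q d y n.
Proof.
move=> Hn Hy1; rewrite /Q big_seq; apply: prodr_ge0 => j; rewrite mem_index_iota => /andP[_ Hjn].
have Hj : (j < d)%N by apply: leq_trans Hn.
have Hd : 0 < d%:R - j%:R :> R by rewrite subr_gt0 ltr_nat.
have Hjy : j%:R <= y.
  apply: le_trans Hy1; rewrite ler_nat; by case: n Hjn {Hn}.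
by rewrite divr_ge0 ?subr_ge0 ?ler_nat ?(ltnW Hj).
Qed.

Lemma Q_strict (R : realType) (d n : nat) (y z : R) : (0 < n)%N -> (n <= d)%N ->
  d%:R <= y -> y < z -> Q d y n < Q d z n.
Proof.
move=> Hn0 Hn Hy Hyz; apply: ltr_prod_nat => // j /andP[_ Hjn].
have Hj : (j < d)%N by apply: leq_trans Hn.
have Hd : 0 < d%:R - j%:R :> R by rewrite subr_gt0 ltr_nat.
have Hjy : j%:R <= y by apply: le_trans Hy; rewrite ler_nat ltnW.
rewrite divr_ge0 ?subr_ge0 ?ler_nat ?(ltnW Hj) //=.
by rewrite ltr_pM2r ?invr_gt0 // ltrD2r.
Qed.

Lemma Q_step (R : realType) (d i : nat) (y : R) : (i < d)%N -> d%:R <= y ->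
  Q d y i ^+ i.+1 <= Q d y i.+1 ^+ i.
Proof.
move=> Hi Hy.
have Hd : forall j, (j <= i)%N -> 0 < d%:R - j%:R :> R.
  by move=> j Hj; rewrite subr_gt0 ltr_nat (leq_ltn_trans Hj).
have Hq : forall j, (j <= i)%N -> 0 <= (y - j%:R) / (d%:R - j%:R).
  move=> j Hj; have Hjy : j%:R <= y.
    by apply: le_trans Hy; rewrite ler_nat ltnW // (leq_ltn_trans Hj).
  by apply: divr_ge0; [rewrite subr_ge0 | exact: ltW (Hd _ Hj)].
have HQ0 : 0 <= Q d y i.
  rewrite /Q big_seq; apply: prodr_ge0 => k; rewrite mem_index_iota => /andP[_ Hk].
  exact: Hq (ltnW Hk).
have Hle : Q d y i <= ((y - i%:R) / (d%:R - i%:R)) ^+ i.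
  apply: le_trans (_ : _ <= \prod_(0 <= j < i) ((y - i%:R) / (d%:R - i%:R))) _;
    last by rewrite prodr_const_nat subn0.
  rewrite /Q !big_seq; apply: ler_prod => j.
  rewrite mem_index_iota => /andP[_ Hj]; rewrite Hq ?(ltnW Hj) //=.
  have := Hd _ (ltnW Hj); have := Hd _ (leqnn i) => H1 H2.
  rewrite ler_pdivrMr // mulrAC ler_pdivlMr //.
  have : j%:R <= i%:R :> R by rewrite ler_nat ltnW.
  move=> *; nra.
rewrite /Q big_nat_recr //= -/(Q d y i) exprMn exprSr.
by apply: ler_pM => //; rewrite ?exprn_ge0.
Qed.

Theorem theorem3p1 (R : realType) (d : nat) (x : nat -> R) :
  (1 <= d)%N ->
  (forall i : nat, (1 <= i <= d)%N -> (i.-1)%:R <= x i) ->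
  size (fpoly d x) = d.+1 ->
  (forall i : nat, (i <= d)%N -> 0 < (fpoly d x)`_i) ->
  ultra_log_concave (fpoly d x) ->
  d%:R <= x d ->
  forall i : nat, (1 <= i < d)%N -> x i.+1 <= x i.
Proof.
move=> Hd1 Hx Hsz Hpos Hulc Hxd i /andP[Hi1 Hid].
set p := fpoly d x in Hsz Hpos Hulc.
pose b k := p`_k / ('C(d, k))%:R.
have bpos : forall k, (k <= d)%N -> 0 < b k.
  by move=> k Hk; rewrite divr_gt0 ?Hpos // ltr0n bin_gt0.
have b0 : b 0%N = 1 by rewrite /b coef_fpoly bin0 divr1.
have bQ : forall k, (1 <= k <= d)%N -> b k = Q d (x k) k.
  move=> k /andP[Hk1 Hkd]; rewrite /b coef_fpoly Hkd.
  by case: k Hk1 Hkd => [//|k] _ Hkd /=; rewrite rbinom_Q.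
have ulc : forall m, (1 <= m)%N -> (m.+1 <= d)%N -> b m.-1 * b m.+1 <= b m ^+ 2.
  move=> m Hm1 Hm; have := Hulc m Hm1; rewrite Hsz /= -/(b m) -/(b m.-1) -/(b m.+1).
  by apply; rewrite leq_subRL ?addn1 // ltnW.
pose r k := b k / b k.-1.
have brec : forall k, (1 <= k <= d)%N -> b k = b k.-1 * r k.
  move=> k /andP[Hk1 Hkd]; rewrite /r mulrC divfK // gt_eqF // bpos //.
  exact: leq_trans (leq_pred k) Hkd.
have rstep : forall m, (1 <= m)%N -> (m.+1 <= d)%N -> r m.+1 <= r m.
  move=> m Hm1 Hm; have := ulc m Hm1 Hm.
  have h1 := bpos m (ltnW Hm); have h2 := bpos m.-1 (leq_trans (leq_pred m) (ltnW Hm)).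
  rewrite /r /= ler_pdivrMr // => H.
  by rewrite mulrAC ler_pdivlMr // mulrC -expr2.
have rdec : forall k m, (1 <= k)%N -> (k <= m)%N -> (m <= d)%N -> r m <= r k.
  move=> k m Hk; elim: m => [|m IH] Hkm Hmd; first by move: Hkm; rewrite leqn0 => /eqP E; move: Hk; rewrite E.
  move: Hkm; rewrite leq_eqVlt => /orP[/eqP <- //|Hkm].
  apply: le_trans (IH Hkm (ltnW Hmd)).
  by apply: rstep => //; apply: leq_trans Hk Hkm.
have Hid' : (i <= d)%N by apply: ltnW.
have bge1 : 1 <= b i.
  have [Hri|Hri] := lerP 1 (r i).
    have H : forall m, (m <= i)%N -> 1 <= b m.
      elim=> [|m IH] Hm; first by rewrite b0.
      rewrite brec /=; last by rewrite /= (leq_trans Hm).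
      apply: le_trans (IH (ltnW Hm)) _; rewrite ler_pMr ?bpos //; last first.
        by apply: leq_trans Hid'; apply: ltnW.
      by apply: le_trans Hri (rdec _ _ _ _ _).
    exact: H.
  have H : forall n, (i + n <= d)%N -> b (i + n)%N <= b i.
    elim=> [|n IH] Hn; first by rewrite addn0 lexx.
    rewrite addnS brec /=; last by rewrite -addnS Hn.
    have Hn' : (i + n <= d)%N by apply: ltnW; rewrite -addnS.
    apply: le_trans (IH Hn'); rewrite ger_pMr ?bpos //.
    apply: ltW; apply: le_lt_trans Hri; apply: rdec => //.
    - by rewrite ltnW // ltnS leq_addr.
    by rewrite -addnS.
  apply: le_trans (H (d - i)%N _); last by rewrite subnKC.
  rewrite subnKC // bQ ?Hd1 ?leqnn //; exact: Q_ge1.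
have Hxi : d%:R <= x i.
  rewrite leNgt; apply/negP => Hlt.
  have Hxi1 : (i.-1)%:R <= x i by apply: Hx; rewrite Hi1 Hid'.
  have := @Q_lt1 R d i (x i) Hi1 Hid' Hxi1 Hlt.
  by rewrite -bQ ?Hi1 ?Hid' // ltNge bge1.
rewrite leNgt; apply/negP => Hz.
have step1 : b i.+1 ^+ i <= b i ^+ i.+1.
  have H : forall m, (m <= i)%N -> r i.+1 ^+ m <= b m.
    elim=> [|m IH] Hm; first by rewrite b0 expr0.
    rewrite brec /=; last by rewrite /= (leq_trans Hm).
    rewrite exprSr; apply: ler_pM.
    - by apply: exprn_ge0; apply: ltW; rewrite divr_gt0 ?bpos.
    - by apply: ltW; rewrite divr_gt0 ?bpos // (leq_trans (leq_pred _)) // ltnW // (leq_ltn_trans Hm).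
    - exact: IH (ltnW Hm).
    - by apply: rdec => //; apply: leq_trans Hm _.
  rewrite brec ?Hid //= exprMn exprSr; apply: ler_pM.
  - by apply: exprn_ge0; apply: ltW; rewrite bpos.
  - by apply: exprn_ge0; apply: ltW; rewrite divr_gt0 ?bpos.
  - by [].
  - exact: H.
have step2 : Q d (x i) i.+1 < Q d (x i.+1) i.+1 by apply: Q_strict.
have step3 := @Q_step R d i (x i) Hid Hxi.
have HQ0 : 0 <= Q d (x i) i.+1.
  by apply: Q_ge0 => //; apply: le_trans Hxi; rewrite ler_nat ltnW.
have := ltrXn2r i HQ0 step2.
rewrite -!bQ ?Hid ?Hi1 ?Hid' //.
rewrite -lt0n Hi1 => H.
move: step1; rewrite (bQ i) ?Hi1 ?Hid' // => step1.
have := le_lt_trans (le_trans step1 step3) H.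
by rewrite ltxx.
Qed.
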